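(* Let $A,B\subset\mathbb{Z}_n$ with $|A|=|B|$ and $\gcd(b,n)=1$ for every $b\in B$. Then $A$ is matched to $B$.
   Context: $\mathbb{Z}_n$ is the additive cyclic group of order $n$. For finite subsets $A,B$ of an abelian group written additively with $|A|=|B|$, $A$ is matched to $B$ if there is a bijection $f:A\to B$ with $a+f(a)\notin A$ for every $a\in A$. *)

(* Defs.v *)
From mathcomp Require Import all_boot all_algebra.
Set Implicit Arguments. Unset Strict Implicit. Unset Printing Implicit Defensive.
Import GRing.Theory.
Local Open Scope ring_scope.

Definition matched (G : finZmodType) (A B : {set G}) : Prop :=
  exists f : G -> G,
    [/\ {in A &, injective f}, f @: A = B & forall a, a \in A -> a + f a \notin A].

(* Main.v *)
Require Import Defs.
From mathcomp Require Import all_boot all_algebra zify.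
Set Implicit Arguments. Unset Strict Implicit. Unset Printing Implicit Defensive.

Section Hall.
Variables (X Y : finType) (y0 : Y).

Definition nbhd (R : X -> Y -> bool) (S : {set X}) : {set Y} :=
  [set y | [exists x in S, R x y]].

Lemma nbhdP (R : X -> Y -> bool) (S : {set X}) y : reflect (exists2 x, x \in S & R x y) (y \in nbhd R S).
Proof.
rewrite inE; apply: (iffP existsP) => [[x /andP[]]|[x xS r]]; first by exists x.
by exists x; rewrite xS.
Qed.

Lemma hall m : forall (R : X -> Y -> bool) (A : {set X}), #|A| <= m ->
  (forall S : {set X}, S \subset A -> #|S| <= #|nbhd R S|) ->
  exists f : X -> Y, {in A, forall x, R x (f x)} /\ {in A &, injective f}.
Proof.
elim: m => [|m IH] R A Am HR.
  exists (fun _ => y0); move: Am; rewrite leqn0 cards_eq0 => /eqP ->.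
  by split => x; rewrite inE.
case: (boolP [exists S0 : {set X}, [&& S0 \subset A, S0 != set0, S0 != A & #|nbhd R S0| <= #|S0|]]).
- case/existsP => S0 /and4P [S0A S0n S0A' tight].
  have pS0 : S0 \proper A by rewrite properEneq S0A' S0A.
  have [f1 [f1R f1i]] : exists f : X -> Y, {in S0, forall x, R x (f x)} /\ {in S0 &, injective f}.
    apply: (IH R S0); first by rewrite -ltnS (leq_trans (proper_card pS0)).
    by move=> S SS0; apply: HR; apply: subset_trans S0A.
  pose R2 x y := R x y && (y \notin nbhd R S0).
  have [f2 [f2R f2i]] : exists f : X -> Y, {in A :\: S0, forall x, R2 x (f x)} /\ {in A :\: S0 &, injective f}.
    apply: (IH R2).
      have : 0 < #|S0| by rewrite lt0n cards_eq0.
      rewrite cardsDS //; lia.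
    move=> S SA.
    have -> : nbhd R2 S = nbhd R S :\: nbhd R S0.
      apply/setP => y; rewrite in_setD andbC; apply/nbhdP/andP.
        by case=> x xS /andP[r ny]; split => //; apply/nbhdP; exists x.
      by case=> /nbhdP [x xS r] ny; exists x; rewrite // /R2 r ny.
    have dis : S :&: S0 = set0.
      apply/setP => x; rewrite !inE; apply/andP => -[xS xS0].
      by move/subsetP: SA => /(_ x xS); rewrite inE xS0.
    have := HR (S :|: S0); rewrite subUset S0A (subset_trans SA) ?subsetDl //.
    move/(_ isT).
    have -> : nbhd R (S :|: S0) = (nbhd R S :\: nbhd R S0) :|: nbhd R S0.
      apply/setP => y; rewrite in_setU in_setD; apply/nbhdP/idP.
        case=> x; rewrite inE => /orP[] xS r.
          case: (boolP (y \in nbhd R S0)) => //= _; rewrite ?andbT ?orbF.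
          by apply/nbhdP; exists x.
        by rewrite orbC; apply/orP; left; apply/nbhdP; exists x.
      case/orP => [/andP[_ /nbhdP [x xS r]]|/nbhdP [x xS r]]; exists x => //;
        by rewrite inE xS ?orbT.
    rewrite cardsU dis cards0 subn0 => h.
    move: h; rewrite cardsU.
    rewrite (_ : _ :&: _ = set0); last first.
      by apply/setP => y; rewrite in_setI in_setD in_set0; case: (y \in nbhd R S0); rewrite ?andbF.
    rewrite cards0 subn0 => h.
    by rewrite -(leq_add2r #|S0|) (leq_trans h) // leq_add2l.
  exists (fun x => if x \in S0 then f1 x else f2 x); split.
    move=> x xA; case: ifP => xS0; first exact: f1R.
    by have := f2R x; rewrite inE xS0 xA => /(_ isT) /andP[].
  move=> x1 x2 x1A x2A.
  have nb : forall x, x \in S0 -> f1 x \in nbhd R S0.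
    by move=> x xS; apply/nbhdP; exists x => //; apply: f1R.
  have nb2 : forall x, x \in A -> x \notin S0 -> f2 x \notin nbhd R S0.
    by move=> x xA xS; have := f2R x; rewrite inE (negbTE xS) xA => /(_ isT) /andP[].
  case: ifP => h1; case: ifP => h2.
  - exact: f1i.
  - by move=> e; move: (nb2 x2 x2A (negbT h2)); rewrite -e nb.
  - by move=> e; move: (nb2 x1 x1A (negbT h1)); rewrite e nb.
  - by apply: f2i; rewrite inE ?h1 ?h2.
- move=> notight.
  case: (set_0Vmem A) => [A0|[a aA]].
    by exists (fun _ => y0); split => x; rewrite A0 inE.
  have : 0 < #|nbhd R [set a]|.
    by apply: leq_trans (HR _ _); rewrite ?cards1 // sub1set.
  rewrite card_gt0 => /set0Pn [b /nbhdP [a' ]]; rewrite inE => /eqP -> Rab.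
  pose R' x y := R x y && (y != b).
  have [f [fR fi]] : exists f : X -> Y, {in A :\ a, forall x, R' x (f x)} /\ {in A :\ a &, injective f}.
    apply: IH.
      by rewrite -ltnS (leq_trans _ Am) // (cardsD1 a A) aA.
    move=> S SA.
    case: (set_0Vmem S) => [->|[s sS]]; first by rewrite cards0.
    have SA' : S \subset A by apply: subset_trans SA (subsetDl _ _).
    have : ~~ [&& S \subset A, S != set0, S != A & #|nbhd R S| <= #|S|].
      by apply/negP => h; move/negP: notight; apply; apply/existsP; exists S.
    rewrite SA' /=; have -> : S != set0 by apply/set0Pn; exists s.
    have -> : S != A.
      apply/eqP => e; move/subsetP: SA => /(_ a); rewrite e aA => /(_ isT).
      by rewrite !inE eqxx.
    rewrite /= -ltnNge => lt.
    apply: leq_trans (_ : #|nbhd R S :\ b| <= _).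
      by rewrite -ltnS (leq_trans lt) // (cardsD1 b (nbhd R S)) -add1n leq_add2r leq_b1.
    apply: subset_leq_card; apply/subsetP => y; rewrite in_setD1 => /andP[yb /nbhdP [x xS r]].
    by apply/nbhdP; exists x; rewrite // /R' r yb.
  exists (fun x => if x == a then b else f x); split.
    move=> x xA; case: eqP => [->//|/eqP xa].
    by have := fR x; rewrite !inE xa xA => /(_ isT) /andP[].
  have fb : forall x, x \in A -> x != a -> f x != b.
    by move=> x xA xa; have := fR x; rewrite !inE xa xA => /(_ isT) /andP[].
  move=> x1 x2 x1A x2A; case: eqP => [->|/eqP h1]; case: eqP => [->|/eqP h2] //.
  - by move=> e; move: (fb x2 x2A h2); rewrite -e eqxx.
  - by move=> e; move: (fb x1 x1A h1); rewrite e eqxx.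
  - by apply: fi; rewrite !inE ?h1 ?h2.
Qed.
End Hall.
Import GRing.Theory.

Section Chowla.
Local Open Scope ring_scope.
Variable G : finZmodType.

Definition sumset (A B : {set G}) : {set G} := [set x + y | x in A, y in B].

Lemma iter_add (A : {set G}) b : (forall a, a \in A -> a + b \in A) ->
  forall k a, a \in A -> a + b *+ k \in A.
Proof.
move=> h; elim=> [|k IH] a aA; first by rewrite mulr0n addr0.
by rewrite mulrS addrA; apply: IH; apply: h.
Qed.

Lemma chowla m : forall A B : {set G}, (#|B| <= m)%N -> A != set0 -> 0 \in B ->
  (forall b, b \in B -> b != 0 -> forall y : G, exists k, y = b *+ k) ->
  sumset A B != setT -> (#|A| + #|B| <= #|sumset A B| + 1)%N.
Proof.
elim: m => [|m IH] A B Bm An B0 gen nT.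
  by move: Bm; rewrite leqn0 cards_eq0 => /eqP B0'; move: B0; rewrite B0' inE.
case: (boolP [exists a in A, exists b in B, a + b \notin A]).
- case/existsP => e /andP [eA /existsP [b /andP [bB ebA]]].
  pose B' := [set x in B | e + x \in A].
  pose C := [set e + x | x in B].
  pose A' := A :|: C.
  have B'B : B' \subset B by apply/subsetP => x; rewrite inE => /andP[].
  have bB' : b \notin B' by rewrite inE (negbTE ebA) andbF.
  have sub : sumset A' B' \subset sumset A B.
    apply/subsetP => z /imset2P [x y xA' yB' ->].
    move: yB'; rewrite inE => /andP [yB eyA].
    move: xA'; rewrite inE => /orP [xA|/imsetP [w wB ->]].
      by apply/imset2P; exists x y.
    by apply/imset2P; exists (e + y) w => //; rewrite addrAC.
  have cardC : #|C| = #|B| by rewrite card_imset //; apply: addrI.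
  have cardB' : #|B'| = #|A :&: C|.
    suff <- : [set e + x | x in B'] = A :&: C by rewrite card_imset //; apply: addrI.
    apply/setP => z.
    rewrite inE; apply/imsetP/andP.
      case=> x; rewrite inE => /andP [xB exA] ->; split => //.
      by apply/imsetP; exists x.
    case=> zA /imsetP [x xB exz]; exists x => //; rewrite inE xB -exz zA.
    done.
  have := IH A' B'.
  have -> : (#|B'| <= m)%N.
    have := proper_card (_ : B' \proper B); rewrite properE B'B /=.
    move=> h; rewrite -ltnS (leq_trans (h _) Bm) //.
    by apply/negP => /subsetP /(_ b bB); apply/negP.
  have -> : A' != set0.
    by apply/set0Pn; exists e; rewrite inE eA.
  have -> : 0 \in B' by rewrite inE B0 addr0.
  move/(_ isT isT isT).
  have -> : sumset A' B' != setT.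
    by apply: contraNneq nT => e'; rewrite eqEsubset subsetT -e' sub.
  move/(_ _ isT).
  have gen' : forall b, b \in B' -> b != 0 -> forall y : G, exists k, y = b *+ k.
    by move=> b' /(subsetP B'B); apply: gen.
  move/(_ gen').
  have := subset_leq_card sub.
  have := cardsUI A C.
  rewrite -/A' cardC -cardB'; lia.
- rewrite negb_exists => /forallP h.
  have closed : forall a b, a \in A -> b \in B -> a + b \in A.
    move=> a b aA bB; move: (h a); rewrite aA /= negb_exists => /forallP /(_ b).
    by rewrite bB /= negbK.
  case: (boolP [exists b in B, b != 0]).
  + case/existsP => b /andP [bB bn0].
    have AT : A = setT.
      apply/setP => y; rewrite inE.
      case/set0Pn: An => a aA.
      have [k' ek'] := gen b bB bn0 (y - a).
      rewrite -(addrNK a y).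
      rewrite ek' addrC; apply: iter_add => // a' a'A; exact: closed.
    exfalso; move/negP: nT; apply; rewrite eqEsubset subsetT /=.
    apply/subsetP => y _; apply/imset2P; exists y 0 => //; last by rewrite addr0.
    by rewrite AT inE.
  + rewrite negb_exists => /forallP hB.
    have B1 : B = [set 0].
      apply/setP => x; rewrite inE; apply/idP/eqP => [xB|->//].
      by move: (hB x); rewrite xB /= negbK => /eqP.
    rewrite B1 cards1 leq_add2r; apply: subset_leq_card.
    apply/subsetP => a aA; apply/imset2P; exists a 0; rewrite ?inE ?addr0 //.
Qed.
End Chowla.

Lemma Zn_gen (n : nat) (Hn : (1 < n)%N) (b : 'Z_n) :
  gcdn (val b) n = 1%N -> forall y : 'Z_n, exists k, y = (b *+ k)%R.
Proof.
move=> hb y.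
have ub : (b \is a GRing.unit)%R.
  have := unitZpE (val b) Hn; rewrite natr_Zp => ->.
  by rewrite /coprime gcdnC hb.
exists (val (b^-1 * y)%R).
by rewrite -mulr_natr natr_Zp mulrA mulrV // mul1r.
Qed.

Theorem corollary3p1 (n : nat) (Hn : (1 < n)%N) (A B : {set 'Z_n}) :
  #|A| = #|B| ->
  (forall b, b \in B -> gcdn (val b) n = 1%N) ->
  matched A B.
Proof.
move=> AB hB.
have B0 : (0%R : 'Z_n) \notin B.
  by apply/negP => /hB; rewrite gcd0n => e; move: Hn; rewrite e.
have AnT : A != setT.
  apply/eqP => AT.
  have : (#|B| <= #|[set: 'Z_n] :\ 0%R|)%N.
    apply: subset_leq_card; apply/subsetP => x xB; rewrite !inE andbT.
    by apply: contraNneq B0 => <-.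
  rewrite -AB AT (cardsD1 0%R [set: 'Z_n]) inE /=.
  by rewrite add1n ltnn.
pose R (a b : 'Z_n) := ((a + b)%R \notin A) && (b \in B).
have H := @hall _ _ 0%R #|A| R A (leqnn _).
have [S SA|f [fR fi]] := H; last first.
  exists f; split => //; last first.
    by move=> a aA; have /andP[] := fR a aA.
  apply/eqP; rewrite eqEcard card_in_imset // AB leqnn andbT.
  apply/subsetP => y /imsetP [a aA ->].
  by have /andP[] := fR a aA.
  case: (set_0Vmem S) => [->|[s sS]]; first by rewrite cards0.
  pose T := [set b in B | [forall a in S, (a + b)%R \in A]].
  have T0 : (0%R : 'Z_n) \notin T by rewrite inE (negbTE B0).
  have TB : T \subset B by apply/subsetP => x; rewrite inE => /andP[].
  have := @chowla _ #|0%R |: T| S (0%R |: T) (leqnn _).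
  have -> : S != set0 by apply/set0Pn; exists s.
  rewrite setU11.
  move/(_ isT isT).
  have gen : forall b, b \in 0%R |: T -> b != 0%R -> forall y : 'Z_n, exists k, y = (b *+ k)%R.
    move=> b; rewrite in_setU1 => /orP [/eqP ->|bT]; first by rewrite eqxx.
    by move=> _; apply: Zn_gen => //; apply: hB; apply: (subsetP TB).
  move/(_ gen).
  have sub : sumset S (0%R |: T) \subset A.
    apply/subsetP => z /imset2P [x y xS yT ->].
    move: yT; rewrite in_setU1 => /orP [/eqP ->|].
      by rewrite addr0; apply: (subsetP SA).
    by rewrite inE => /andP [_ /forallP /(_ x)]; rewrite xS.
  have -> : sumset S (0%R |: T) != setT.
    by apply: contraNneq AnT => e; rewrite eqEsubset subsetT -e sub.
  move/(_ isT).
  have := subset_leq_card sub.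
  rewrite cardsU1 T0.
  have : (#|B| <= #|T :|: nbhd R S|)%N.
    apply: subset_leq_card; apply/subsetP => b bB; rewrite in_setU.
    case: (boolP [forall a in S, (a + b)%R \in A]) => h.
      by rewrite inE bB h.
    apply/orP; right; apply/nbhdP; move: h; rewrite negb_forall => /existsP [a].
    by rewrite negb_imply => /andP [aS abA]; exists a; rewrite // /R abA bB.
  have := leq_card_setU T (nbhd R S).
  case => h _; move: h.
  rewrite -AB /= => h1 h2 h3 h4.
  rewrite -(leq_add2r #|T|) [X in _ <= X]addnC (leq_trans _ h1) // (leq_trans _ h2) // (leq_trans _ h3) //.
  rewrite -(leq_add2r 1) (leq_trans _ h4) //.
  by rewrite (addnC 1) addnA.
Qed.
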